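(* Let $n\ge 4$ and let $D_n$ be the tree on vertex set $\{1,2,\ldots,n\}$ whose edges are $\{1,3\}$, $\{2,3\}$ and $\{i,i+1\}$ for $3\le i\le n-1$. Let $A$ be its adjacency matrix, $e$ the all-ones vector of length $n$, $W(D_n)=[e,Ae,\ldots,A^{n-1}e]$, and let $\hat W(D_n)$ be the $(n-1)\times(n-1)$ matrix obtained from $W(D_n)$ by deleting the first row and the last column. Then: (i) if $4\nmid n$, then $\det \hat W(D_n)=\pm 2^{\lfloor n/2\rfloor-1}$; (ii) if $4\mid n$, then $\operatorname{rank}\hat W(D_n)=n-2$.
   Context: $D_n$ is the Dynkin graph: the path of order $n-1$ with a pendant edge added at its second vertex (here the path is $1,3,4,\ldots,n$ and vertex $2$ is the pendant vertex attached to vertex $3$). *)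

(* Defs.v *)
From mathcomp Require Import all_boot all_order all_algebra.
Set Implicit Arguments. Unset Strict Implicit. Unset Printing Implicit Defensive.
Import GRing.Theory Num.Theory.
Local Open Scope ring_scope.

(* Vertices 1..n of the paper are represented by 'I_n, vertex k+1 <-> index k.
   Edges of D_n (paper): {1,3}, {2,3}, {i,i+1} for 3 <= i <= n-1.
   0-based: {0,2}, {1,2}, {i,i+1} for 2 <= i <= n-2. *)
Definition Dedge (i j : nat) : bool :=
  [|| (i == 0%N) && (j == 2%N), (i == 1%N) && (j == 2%N)
    | (2 <= i)%N && (j == i.+1)].

Definition Dadj (R : nzRingType) (n : nat) : 'M[R]_n :=
  \matrix_(i < n, j < n) (if Dedge i j || Dedge j i then 1 else 0).

Definition Wmat (R : nzRingType) (n : nat) : 'M[R]_n :=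
  \matrix_(i < n, j < n) ((Dadj R n ^+ j) *m const_mx 1) i (@ord0 0).

(* entry (i,j) of W(D_n) with nat indices (0 outside the range, never used) *)
Definition Went (R : nzRingType) (n : nat) (i j : nat) : R :=
  match @insub nat (fun k => k < n)%N _ i, @insub nat (fun k => k < n)%N _ j with
  | Some i', Some j' => Wmat R n (i' : 'I_n) (j' : 'I_n)
  | _, _ => 0
  end.

Definition What (R : nzRingType) (n : nat) : 'M[R]_(n.-1) :=
  \matrix_(i < n.-1, j < n.-1) Went R n i.+1 j.

(* Main.v *)
Require Import Defs.
From mathcomp Require Import all_boot all_order all_algebra.
From mathcomp Require Import fingroup perm zify ring.
Import GRing.Theory Num.Theory.
Local Open Scope ring_scope.

Definition pm {R : nzRingType} (x y : R) := x = y \/ x = - y.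

Lemma sum_delta (R : nzRingType) N (F : nat -> R) c :
  \sum_(l < N) (if (l : nat) == c then F l else 0) = if (c < N)%N then F c else 0.
Proof.
case: ifP => hc.
  rewrite (bigD1 (Ordinal hc)) //= eqxx big1 ?addr0 // => l /eqP hl.
  case: eqP => // e; case: hl; apply: val_inj; exact: e.
rewrite big1 // => l _; case: eqP => // e; move: (ltn_ord l); by rewrite e hc.
Qed.

Section Reindex.
Variable R : comNzRingType.

Lemma det_reindex N (f : nat -> nat -> R) (rho gam : nat -> nat) :
  (forall x, (x < N)%N -> (rho x < N)%N) ->
  (forall x y, (x < N)%N -> (y < N)%N -> rho x = rho y -> x = y) ->
  (forall x, (x < N)%N -> (gam x < N)%N) ->
  (forall x y, (x < N)%N -> (y < N)%N -> gam x = gam y -> x = y) ->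
  pm (\det (\matrix_(i < N, j < N) f (rho i) (gam j)))
     (\det (\matrix_(i < N, j < N) f i j)).
Proof.
move=> rN rI gN gI.
pose ro (i : 'I_N) : 'I_N := Ordinal (rN i (ltn_ord i)).
pose go (i : 'I_N) : 'I_N := Ordinal (gN i (ltn_ord i)).
have roI : injective ro.
  by move=> i j /(congr1 val) /= /rI h; apply: val_inj; apply: h.
have goI : injective go.
  by move=> i j /(congr1 val) /= /gI h; apply: val_inj; apply: h.
pose s := perm roI; pose t := perm goI.
have -> : \matrix_(i < N, j < N) f (rho i) (gam j) =
   row_perm s (col_perm t (\matrix_(i < N, j < N) f i j)).
  by apply/matrixP => i j; rewrite !mxE !permE.
rewrite row_permE col_permE !det_mulmx !det_perm odd_permV.
case: (odd_perm s); case: (odd_perm t); rewrite /= ?expr1 ?expr0 ?mul1r ?mulr1;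
  rewrite ?mulN1r ?mulrN1 ?opprK; by [left | right].
Qed.

Lemma det_block_nat p q (h : nat -> nat -> R) :
  (forall i j, (i < p)%N -> (j < q)%N -> h i (p + j)%N = 0) ->
  \det (\matrix_(i < p + q, j < p + q) h i j) =
  \det (\matrix_(i < p, j < p) h i j) * \det (\matrix_(i < q, j < q) h (p + i)%N (p + j)%N).
Proof.
move=> h0; rewrite -[X in \det X]submxK.
have -> : ursubmx (\matrix_(i < p + q, j < p + q) h i j) = 0.
  by apply/matrixP => i j; rewrite !mxE /= h0.
rewrite det_lblock; congr (_ * _); congr (determinant _); apply/matrixP => i j; by rewrite !mxE.
Qed.

Lemma det_mul_trig N (A : 'M[R]_N) (E : 'M[R]_N) :
  (forall i j : 'I_N, (i < j)%N -> E i j = 0) -> (forall i, E i i = 1) ->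
  \det (A *m E) = \det A.
Proof.
move=> h1 h2; rewrite det_mulmx (@det_trig _ _ E); last by apply/is_trig_mxP; exact: h1.
by rewrite big1 ?mulr1.
Qed.

End Reindex.

Section RankF.
Variable F : fieldType.

Lemma rank_reindex N (f : nat -> nat -> F) (rho gam : nat -> nat) :
  (forall x, (x < N)%N -> (rho x < N)%N) ->
  (forall x y, (x < N)%N -> (y < N)%N -> rho x = rho y -> x = y) ->
  (forall x, (x < N)%N -> (gam x < N)%N) ->
  (forall x y, (x < N)%N -> (y < N)%N -> gam x = gam y -> x = y) ->
  \rank (\matrix_(i < N, j < N) f (rho i) (gam j)) =
  \rank (\matrix_(i < N, j < N) f i j).
Proof.
move=> rN rI gN gI.
pose ro (i : 'I_N) : 'I_N := Ordinal (rN i (ltn_ord i)).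
pose go (i : 'I_N) : 'I_N := Ordinal (gN i (ltn_ord i)).
have roI : injective ro.
  by move=> i j /(congr1 val) /= /rI h; apply: val_inj; apply: h.
have goI : injective go.
  by move=> i j /(congr1 val) /= /gI h; apply: val_inj; apply: h.
pose s := perm roI; pose t := perm goI.
have -> : \matrix_(i < N, j < N) f (rho i) (gam j) =
   row_perm s (col_perm t (\matrix_(i < N, j < N) f i j)).
  by apply/matrixP => i j; rewrite !mxE !permE.
rewrite row_permE col_permE -mxrank_tr trmx_mul mxrankMfree; last first.
  by rewrite row_free_unit unitmx_tr unitmx_perm.
by rewrite mxrank_tr mxrankMfree // row_free_unit unitmx_perm.
Qed.

Lemma rank_mul_unit N (A E : 'M[F]_N) : E \in unitmx -> \rank (A *m E) = \rank A.
Proof. by move=> u; rewrite mxrankMfree // row_free_unit. Qed.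

Lemma unit_trig N (E : 'M[F]_N) :
  (forall i j : 'I_N, (i < j)%N -> E i j = 0) -> (forall i, E i i = 1) ->
  E \in unitmx.
Proof.
move=> h1 h2; rewrite unitmxE det_trig; last by apply/is_trig_mxP; exact: h1.
by rewrite big1 ?unitr1.
Qed.

Lemma rank_block_nat p q (h : nat -> nat -> F) :
  (forall i j, (i < p)%N -> (j < q)%N -> h i (p + j)%N = 0) ->
  \det (\matrix_(i < p, j < p) h i j) != 0 ->
  \rank (\matrix_(i < p + q, j < p + q) h i j) =
  (p + \rank (\matrix_(i < q, j < q) h (p + i)%N (p + j)%N))%N.
Proof.
move=> h0 hd; rewrite -[X in \rank X]submxK.
have -> : ursubmx (\matrix_(i < p + q, j < p + q) h i j) = 0.
  by apply/matrixP => i j; rewrite !mxE /= h0.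
set A := ulsubmx _; set C := dlsubmx _; set D := drsubmx _.
have Au : A \in unitmx.
  rewrite unitmxE unitfE; move: hd; congr (determinant _ != 0).
  by apply/matrixP => i j; rewrite !mxE.
have -> : block_mx A 0 C D = block_mx 1%:M 0 (C *m invmx A) 1%:M *m block_mx A 0 0 D.
  by rewrite mulmx_block !mulmx0 !mul0mx !mul1mx !addr0 !add0r -mulmxA mulVmx // mulmx1.
rewrite -mxrank_tr trmx_mul mxrankMfree; last first.
  by rewrite row_free_unit unitmx_tr unitmxE det_lblock !det1 mulr1 unitr1.
rewrite mxrank_tr rank_diag_block_mx mxrank_unit //; congr (_ + \rank _)%N.
by apply/matrixP => i j; rewrite !mxE.
Qed.

End RankF.


Ltac evalb := repeat match goal with
  | |- context [ (?x == ?y)%N ] =>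
      first [ have -> : (x == y)%N = true by lia | have -> : (x == y)%N = false by lia ]
  | |- context [ (?x < ?y)%N ] =>
      first [ have -> : (x < y)%N = true by lia | have -> : (x < y)%N = false by lia ]
  | |- context [ (?x <= ?y)%N ] =>
      first [ have -> : (x <= y)%N = true by lia | have -> : (x <= y)%N = false by lia ]
  end.

Ltac decide_all := evalb; try (match goal with
  | |- context [ (?x == ?y)%N ] => let E := fresh "E" in case E : (x == y)%N; decide_all
  | |- context [ (?x < ?y)%N ] => let E := fresh "E" in case E : (x < y)%N; decide_all
  | |- context [ (?x <= ?y)%N ] => let E := fresh "E" in case E : (x <= y)%N; decide_all
  end).

Ltac substE := repeat match goal with
  | H : (?x == ?c)%N = true |- _ => is_var x; move/eqP: H => H; subst x
  | H : (?c == ?x)%N = true |- _ => is_var x; move/eqP: H => H; subst x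
  end.

Ltac cases_if := repeat (case: ifP => ?).

Definition ind {R : nzRingType} (b : bool) : R := if b then 1 else 0.

Lemma det22 (R : comNzRingType) (M : 'M[R]_2) : \det M = M 0 0 * M 1 1 - M 0 1 * M 1 0.
Proof.
rewrite (expand_det_row M 0) !big_ord_recl big_ord0 /cofactor !det_mx11 !mxE /=.
rewrite addr0 !expr0 !expr1 !mul1r.
have e1 : lift (0 : 'I_2) (0 : 'I_1) = 1 by apply/val_inj.
have e2 : lift (ord0 : 'I_2) (0 : 'I_1) = 1 by apply/val_inj.
have e3 : lift (ord0 : 'I_2) (ord0 : 'I_1) = 1 by apply/val_inj.
have e4 : lift (lift (ord0 : 'I_2) (ord0 : 'I_1)) (0 : 'I_1) = 0 by apply/val_inj.
have e5 : (ord0 : 'I_2) = 0 by apply/val_inj.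
rewrite ?e1 ?e2 ?e4 ?e3 ?e5.
have e6 : lift (1 : 'I_2) (0 : 'I_1) = 0 by apply/val_inj.
rewrite e6 mulN1r mulrN; by [].
Qed.

Lemma det33 (R : comNzRingType) (f : nat -> nat -> R) :
  \det (\matrix_(i < 3, j < 3) f i j) =
  f 0 0 * (f 1 1 * f 2 2 - f 1 2 * f 2 1)
  - f 0 1 * (f 1 0 * f 2 2 - f 1 2 * f 2 0)
  + f 0 2 * (f 1 0 * f 2 1 - f 1 1 * f 2 0).
Proof.
rewrite (expand_det_row _ 0) !big_ord_recl big_ord0 /cofactor.
rewrite !(expand_det_row _ 0) !big_ord_recl !big_ord0 /cofactor !det_mx11 !mxE /=.
rewrite /bump /=. rewrite !expr0 !expr1 !exprS !expr0; ring.
Qed.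

Lemma sum_ind (R : nzRingType) N (F : nat -> R) c :
  \sum_(l < N) F l * ind ((l : nat) == c) = if (c < N)%N then F c else 0.
Proof.
rewrite -sum_delta; apply: eq_bigr => l _; rewrite /ind; case: eqP => _.
  by rewrite mulr1. by rewrite mulr0.
Qed.

Section PM.
Variable R : nzRingType.
Lemma pm_refl (x : R) : pm x x. Proof. by left. Qed.
Lemma pm_sym (x y : R) : pm x y -> pm y x.
Proof. by case=> ->; [left | right; rewrite opprK]. Qed.
Lemma pm_trans (x y z : R) : pm x y -> pm y z -> pm x z.
Proof.
by case=> -> [] ->; rewrite ?opprK; [left|right|right|left].
Qed.
Lemma pm_mull (c x y : R) : pm x y -> pm (c * x) (c * y).
Proof. by case=> ->; [left | right; rewrite mulrN]. Qed.
Lemma pm_opp (x y : R) : pm x y -> pm x (- y).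
Proof. by case=> ->; [right; rewrite opprK | left]. Qed.
End PM.
Arguments pm_refl {R x}.
Arguments pm_sym {R x y}.
Arguments pm_trans {R x y z}.
Arguments pm_mull {R} c {x y}.
Arguments pm_opp {R x y}.

Section FFam.
Variable R : comNzRingType.

Definition Ff (r : nat) (a b : R) (k l : nat) : R :=
  if l == 0%N then (if k == 0%N then a + b else if k == r.-1 then a - b else 1)
  else ind (k + l == r.-1)%N + ind (k + l == r)%N + ind (k.+1 == l)%N - ind (k == l)%N.

Definition FM r a b : 'M[R]_r := \matrix_(i < r, j < r) Ff r a b i j.

Definition Fp r (a b : R) (k l : nat) : R := Ff r.+2 a b k l -
   (if l == 0%N then a * Ff r.+2 a b k 1 + b * Ff r.+2 a b k r.+1 else 0).
Definition Eg r (a b : R) (l j : nat) : R :=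
  if j == 0%N then ind (l == 0)%N - a * ind (l == 1)%N - b * ind (l == r.+1)%N
  else ind (l == j)%N.
Definition rho r (x : nat) := if x == 0%N then 0%N else if x == 1%N then r.+1 else x.-1.
Definition gam r (x : nat) := if x == 0%N then 1%N else if x == 1%N then r.+1 else if x == 2%N then 0%N else x.-1.

Lemma FM_Eg r a b : (2 <= r)%N ->
  FM r.+2 a b *m \matrix_(l < r.+2, j < r.+2) Eg r a b l j = \matrix_(k < r.+2, l < r.+2) Fp r a b k l.
Proof.
move=> r2; apply/matrixP => k j; rewrite !mxE /Fp /Eg.
under eq_bigr => l _ do rewrite mxE mxE.
case: ifP => j0.
  under eq_bigr => l _ do rewrite mulrBr mulrBr [_ * (a * _)]mulrCA [_ * (b * _)]mulrCA.
  rewrite !sumrB -!mulr_sumr !sum_ind /=; move/eqP: j0 => ->; evalb; ring.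
by rewrite (@sum_ind _ _ (fun l => Ff r.+2 a b k l)) ltn_ord subr0.
Qed.

Lemma Eg_trig1 r a b (i j : 'I_r.+2) : (i < j)%N -> (\matrix_(l < r.+2, j < r.+2) Eg r a b l j) i j = 0.
Proof. by move=> ij; rewrite mxE /Eg /ind; case: ifP => j0; [exfalso; lia | evalb]. Qed.

Lemma Eg_trig2 r a b (i : 'I_r.+2) : (2 <= r)%N -> (\matrix_(l < r.+2, j < r.+2) Eg r a b l j) i i = 1.
Proof. by move=> r2; rewrite mxE /Eg /ind; case: ifP => j0; evalb; ring. Qed.

Lemma rho_ok r : (1 <= r)%N -> [/\ (forall x, (x < r.+2)%N -> (rho r x < r.+2)%N),
  (forall x y, (x < r.+2)%N -> (y < r.+2)%N -> rho r x = rho r y -> x = y),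
  (forall x, (x < r.+2)%N -> (gam r x < r.+2)%N) &
  (forall x y, (x < r.+2)%N -> (y < r.+2)%N -> gam r x = gam r y -> x = y)].
Proof.
move=> r1; split; [move=> x hx; rewrite /rho; cases_if; lia
       | move=> x y hx hy; rewrite /rho; cases_if; lia
       | move=> x hx; rewrite /gam; cases_if; lia
       | move=> x y hx hy; rewrite /gam; cases_if; lia].
Qed.

Lemma Fblock_UR r a b i j : (2 <= r)%N -> (i < 2)%N -> (j < r)%N ->
  Fp r a b (rho r i) (gam r (2 + j)) = 0.
Proof.
move=> r2 hi hj; case: i hi => [|[|i]] // _; case: j hj => [|j] hj;
  rewrite /Fp /rho /gam /Ff /ind /=; decide_all; ring.
Qed.

Lemma Fblock_UL r a b : (2 <= r)%N ->
  \det (\matrix_(i < 2, j < 2) Fp r a b (rho r i) (gam r j)) = - 2.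
Proof. by move=> r2; rewrite det22 !mxE /Fp /rho /gam /Ff /ind /=; decide_all; ring. Qed.

Lemma Fblock_DR r a b : (2 <= r)%N ->
  \matrix_(i < r, j < r) Fp r a b (rho r (2 + i)%N) (gam r (2 + j)%N) = FM r (1 - b) a.
Proof.
move=> r2; apply/matrixP => i j; rewrite !mxE /Fp /rho /gam /Ff /ind /=.
have := ltn_ord i; have := ltn_ord j; move: (i : nat) (j : nat) => i' j' hj hi.
case: j' hj => [|j'] hj /=; decide_all; ring.
Qed.

Lemma detF_step r a b : (2 <= r)%N ->
  pm (\det (FM r.+2 a b)) (2 * \det (FM r (1 - b) a)).
Proof.
move=> r2.
have hdet : \det (FM r.+2 a b) = \det (\matrix_(k < r.+2, l < r.+2) Fp r a b k l).
  rewrite -FM_Eg // det_mul_trig //; [exact: Eg_trig1 | move=> i; exact: Eg_trig2].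
have [h1 h2 h3 h4] := @rho_ok r (ltnW r2).
have hr := @det_reindex R _ (Fp r a b) _ _ h1 h2 h3 h4.
have hb : \det (\matrix_(i < r.+2, j < r.+2) Fp r a b (rho r i) (gam r j)) =
   \det (\matrix_(i < 2, j < 2) Fp r a b (rho r i) (gam r j)) *
   \det (\matrix_(i < r, j < r) Fp r a b (rho r (2 + i)%N) (gam r (2 + j)%N)).
  apply: (@det_block_nat R 2 r (fun i j => Fp r a b (rho r i) (gam r j))).
  move=> i j hi hj; exact: Fblock_UR.
rewrite hdet; apply: pm_trans (pm_sym hr) _.
rewrite hb Fblock_UL // Fblock_DR // mulNr; apply: pm_sym; apply: pm_opp; exact: pm_refl.
Qed.

Definition fst4 (p : R * R) : R * R := (1 - p.2, p.1).

Lemma detF_iter r0 q (p : R * R) : (2 <= r0)%N ->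
  pm (\det (FM (r0 + 2 * q) p.1 p.2)) (2 ^+ q * \det (FM r0 (iter q fst4 p).1 (iter q fst4 p).2)).
Proof.
move=> r2; elim: q p => [|q IH] p.
  by rewrite muln0 addn0 expr0 mul1r; exact: pm_refl.
have -> : (r0 + 2 * q.+1 = (r0 + 2 * q).+2)%N by lia.
have r2q : (2 <= r0 + 2 * q)%N by lia.
apply: pm_trans (detF_step _ p.1 p.2 r2q) _.
rewrite exprS -mulrA iterSr; apply: pm_mull; exact: (IH (fst4 p)).
Qed.

Lemma iter4 (p : R * R) : iter 4 fst4 p = p.
Proof. case: p => a b; rewrite /= /fst4 /=; congr pair; ring. Qed.

Lemma iter_mod q (p : R * R) : iter q fst4 p = iter (q %% 4) fst4 p.
Proof.
rewrite {1}(divn_eq q 4) iterD; elim: (q %/ 4)%N => [|k IH] //.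
by rewrite mulSn iterD iter4 IH.
Qed.

Lemma detF2 a b : \det (FM 2 a b) = - 2 * (a - b).
Proof. by rewrite det22 !mxE /Ff /ind /=; ring. Qed.

Lemma detF3 a b : \det (FM 3 a b) = 2 - 4 * b.
Proof. rewrite /FM det33 /Ff /ind /=; ring. Qed.

End FFam.
Arguments Ff {R} r a b k l.
Arguments FM {R} r a b.
Arguments Fp {R} r a b k l.
Arguments Eg {R} r a b l j.
Arguments fst4 {R} p.

Section FRank.
Variable F : numFieldType.

Lemma rankF_step r (a b : F) : (2 <= r)%N ->
  \rank (FM r.+2 a b) = (2 + \rank (FM r (1 - b) a))%N.
Proof.
move=> r2.
have hrk : \rank (FM r.+2 a b) = \rank (\matrix_(k < r.+2, l < r.+2) Fp r a b k l).
  rewrite -FM_Eg // rank_mul_unit //; apply: unit_trig; [exact: Eg_trig1 | move=> i; exact: Eg_trig2].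
have [h1 h2 h3 h4] := @rho_ok r (ltnW r2).
rewrite hrk -(@rank_reindex F _ (Fp r a b) _ _ h1 h2 h3 h4).
rewrite -Fblock_DR //.
apply: (@rank_block_nat F 2 r (fun i j => Fp r a b (rho r i) (gam r j))).
  move=> i j hi hj; exact: Fblock_UR.
by rewrite Fblock_UL // oppr_eq0 pnatr_eq0.
Qed.

Lemma rankF_iter r0 q (p : F * F) : (2 <= r0)%N ->
  \rank (FM (r0 + 2 * q) p.1 p.2) = (2 * q + \rank (FM r0 (iter q fst4 p).1 (iter q fst4 p).2))%N.
Proof.
move=> r2; elim: q p => [|q IH] p; first by rewrite muln0 addn0.
have -> : (r0 + 2 * q.+1 = (r0 + 2 * q).+2)%N by lia.
rewrite rankF_step; last by lia.
rewrite iterSr (IH (fst4 p)); lia.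
Qed.

End FRank.


Section Cheb.
Variable R : comNzRingType.

Fixpoint T2p (j : nat) : {poly R} * {poly R} :=
  match j with 0 => (2%:P, 'X) | j'.+1 => let: (p, q) := T2p j' in (q, 'X * q - p) end.
Definition T2 j := (T2p j).1.

Lemma T2_0 : T2 0 = 2%:P. Proof. by []. Qed.
Lemma T2_1 : T2 1 = 'X. Proof. by []. Qed.
Lemma T2_SS j : T2 j.+2 = 'X * T2 j.+1 - T2 j.
Proof. by rewrite /T2 /=; case: (T2p j). Qed.

Lemma T2_coef j : (forall k, (j < k)%N -> (T2 j)`_k = 0) /\ ((0 < j)%N -> (T2 j)`_j = 1).
Proof.
elim/ltn_ind: j => -[|[|j]] IH.
- by split => // k hk; rewrite T2_0 coefC; case: k hk.
- split; first by move=> k hk; rewrite T2_1 coefX; case: k hk => [|[|k]].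
  by rewrite T2_1 coefX.
- have [a1 a2] := IH j.+1 (ltnSn _); have [b1 _] := IH j (ltnW (ltnSn _)).
  split.
    move=> k hk; rewrite T2_SS coefB coefXM; case: k hk => [|k] hk //=.
    by rewrite a1 ?b1 ?subr0 //; lia.
  by move=> _; rewrite T2_SS coefB coefXM /= a2 // b1 ?subr0.
Qed.

End Cheb.

Lemma horner_sum (R : comNzRingType) m N (A : 'M[R]_m.+1) (p : {poly R}) :
  (size p <= N)%N -> horner_mx A p = \sum_(l < N) p`_l *: A ^+ l.
Proof.
move=> hs; rewrite [in LHS](_ : p = \poly_(l < N) p`_l); last first.
  apply/polyP => k; rewrite coef_poly; case: ltnP => // hk.
  by apply: nth_default; apply: leq_trans hs hk.
rewrite poly_def rmorph_sum; apply: eq_bigr => l _.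
by rewrite -mul_polyC rmorphM /= horner_mx_C rmorphXn /= horner_mx_X -mulmxE mul_scalar_mx.
Qed.

Section Dn.
Variable R : comNzRingType.
Variable r : nat.
Hypothesis hr : (2 <= r)%N.

Definition Av (g : nat -> R) (i : nat) : R :=
  if (i < 2)%N then g 2%N else if i == 2%N then g 0%N + g 1%N + g 3%N
  else g i.-1 + (if (i.+1 < r.+2)%N then g i.+1 else 0).

Lemma Dadj_vec (g : nat -> R) (i : 'I_(r.+2)) :
  (Dadj R r.+2 *m \col_(k < r.+2) g k) i 0 = Av g i.
Proof.
rewrite mxE.
under eq_bigr => l _ do rewrite !mxE.
have := ltn_ord i; move: (i : nat) => i' hi.
rewrite (eq_bigr (fun l : 'I_r.+2 => ind (i' < 2)%N * (g l * ind (l == 2%N :> nat))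
   + ind (i' == 2%N) * (g l * ind (l == 0%N :> nat)) + ind (i' == 2%N) * (g l * ind (l == 1%N :> nat))
   + ind (2 <= i')%N * (g l * ind (l == i'.+1 :> nat)) + ind (3 <= i')%N * (g l * ind (l == i'.-1 :> nat)))); last first.
  move=> l _; have := ltn_ord l; move: (l : nat) => l' hl.
  rewrite /Dedge /ind; decide_all; rewrite /=; ring.
rewrite !big_split /= -!mulr_sumr.
rewrite !(@sum_ind _ _ g) /Av /ind; decide_all; substE; rewrite /=; ring.
Qed.

Definition Wt (j i : nat) : R :=
  if j == 0%N then 2 else if (i < 2)%N then 1
  else 2 * ind (i + j < r.+2)%N + ind (i + j == r.+2)%N + ind (i == j.+1)%N.

Lemma Wt_rec1 i : (i < r.+2)%N -> Wt 1 i = Av (fun _ => 1) i.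
Proof. move=> hi; rewrite /Wt /Av /ind; decide_all; substE; rewrite /=; ring. Qed.

Lemma Wt_rec j i : (j.+2 <= r)%N -> (i < r.+2)%N -> Wt j.+2 i = Av (Wt j.+1) i - Wt j i.
Proof. move=> hj hi; rewrite /Wt /Av /ind; decide_all; substE; rewrite /=; ring. Qed.

Lemma col_of (v : 'cV[R]_r.+2) (g : nat -> R) :
  (forall i : 'I_r.+2, v i 0 = g i) -> v = \col_(k < r.+2) g k.
Proof. by move=> h; apply/matrixP => k c; rewrite ord1 mxE h. Qed.

Lemma entryB (u v : 'cV[R]_r.+2) (i : 'I_r.+2) : (u - v) i 0 = u i 0 - v i 0.
Proof. by rewrite !mxE. Qed.

Lemma Wt_vec j : (j <= r)%N -> forall i : 'I_r.+2,
  (horner_mx (Dadj R r.+2) (T2 R j) *m (const_mx 1 : 'cV[R]_r.+2)) i 0 = Wt j i.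
Proof.
elim/ltn_ind: j => j IH hj i; case: j IH hj => [|[|j]] IH hj.
- by rewrite T2_0 horner_mx_C mul_scalar_mx !mxE mulr1.
- rewrite T2_1 horner_mx_X (@col_of (const_mx 1) (fun _ => 1)); last by move=> k; rewrite mxE.
  by rewrite (Dadj_vec (fun _ => 1)) Wt_rec1.
- rewrite T2_SS rmorphB rmorphM /= horner_mx_X -mulmxE mulmxBl -mulmxA.
  rewrite entryB (@col_of (horner_mx (Dadj R r.+2) (T2 R j.+1) *m const_mx 1) (Wt j.+1)); last by move=> k; rewrite IH //; lia.
  by rewrite Dadj_vec IH ?Wt_rec //; lia.
Qed.

End Dn.

Section Top.
Variable R : comNzRingType.
Variable r : nat.
Hypothesis hr : (2 <= r)%N.

Definition Pj j : {poly R} := if j == 0%N then 1 else T2 R j.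
Definition Wf j i : R := if j == 0%N then 1 else Wt R r j i.
Definition Umat : 'M[R]_r.+1 := \matrix_(l < r.+1, j < r.+1) (Pj j)`_l.

Lemma What_entry (i l : 'I_r.+1) :
  What R r.+2 i l = ((Dadj R r.+2 ^+ l) *m (const_mx 1 : 'cV[R]_r.+2)) (lift ord0 i) 0.
Proof.
rewrite /What mxE /Went.
have h1 : (i.+1 < r.+2)%N by rewrite ltnS.
have h2 : (l < r.+2)%N by apply: ltn_trans (ltn_ord l) _.
rewrite (insubT (fun k => k < r.+2)%N h1) (insubT (fun k => k < r.+2)%N h2) /Wmat mxE.
have -> : (Sub i.+1 h1 : 'I_r.+2) = lift ord0 i by apply: val_inj.
by [].
Qed.

Lemma Pj_coef j k : (j < k)%N -> (Pj j)`_k = 0.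
Proof.
rewrite /Pj; case: ifP => j0 hk; last by have [h _] := T2_coef R j; exact: h.
by rewrite coefC; case: k hk.
Qed.

Lemma Pj_lead j : (Pj j)`_j = 1.
Proof.
rewrite /Pj; case: ifP => j0; first by move/eqP: j0 => ->; rewrite coefC.
by have [_ h] := T2_coef R j; apply: h; rewrite lt0n j0.
Qed.

Lemma horner_Pj (j : 'I_r.+1) (i : 'I_r.+2) :
  (horner_mx (Dadj R r.+2) (Pj j) *m (const_mx 1 : 'cV[R]_r.+2)) i 0 = Wf j i.
Proof.
rewrite /Wf /Pj; case: ifP => j0.
  by rewrite rmorph1 mul1mx mxE.
by rewrite Wt_vec // -ltnS.
Qed.

Lemma WhatU : What R r.+2 *m Umat = \matrix_(i < r.+1, j < r.+1) Wf j i.+1.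
Proof.
apply/matrixP => i j; rewrite !mxE.
rewrite -[i.+1]/(val (lift ord0 i)) -horner_Pj (@horner_sum _ _ r.+1); last first.
  by apply/leq_sizeP => k hk; apply: Pj_coef; apply: leq_trans (ltn_ord j) hk.
rewrite mulmx_suml summxE; apply: eq_bigr => l _.
rewrite -scalemxAl What_entry [in RHS]mxE mulrC; congr (_ * _); by rewrite mxE.
Qed.

Lemma det_Umat : \det Umat = 1.
Proof.
rewrite -det_tr det_trig; last first.
  by apply/is_trig_mxP => i j ij; rewrite !mxE Pj_coef.
by rewrite big1 // => i _; rewrite !mxE Pj_lead.
Qed.

End Top.

Section Top2.
Variable R : comNzRingType.
Variable r : nat.
Hypothesis hr : (2 <= r)%N.

Definition E3 (l j : nat) : R :=
  if j == 0%N then ind (l == 0)%N - ind (l == r)%N else ind (l == j)%N - ind (l == j.+1)%N.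
Definition G2 (k j : nat) : R := Wf R r j k.+1 -
  (if j == 0%N then Wf R r r k.+1 else if (j.+1 < r.+1)%N then Wf R r j.+1 k.+1 else 0).
Definition gam3 (x : nat) := if x == 0%N then r else x.-1.

Lemma Mw_E3 : \matrix_(i < r.+1, j < r.+1) Wf R r j i.+1 *m \matrix_(l < r.+1, j < r.+1) E3 l j
  = \matrix_(i < r.+1, j < r.+1) G2 i j.
Proof.
apply/matrixP => k j; rewrite !mxE /E3 /G2.
under eq_bigr => l _ do rewrite !mxE.
case: ifP => j0.
  under eq_bigr => l _ do rewrite mulrBr.
  rewrite sumrB !(@sum_ind _ _ (fun l => Wf R r l k.+1)) /=; move/eqP: j0 => ->; evalb; by [].
under eq_bigr => l _ do rewrite mulrBr.
by rewrite sumrB !(@sum_ind _ _ (fun l => Wf R r l k.+1)) ltn_ord.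
Qed.

Lemma E3_trig1 (i j : 'I_r.+1) : (i < j)%N -> (\matrix_(l < r.+1, j < r.+1) E3 l j) i j = 0.
Proof. by move=> ij; rewrite mxE /E3 /ind; case: ifP => j0; [exfalso; lia | evalb; ring]. Qed.

Lemma E3_trig2 (i : 'I_r.+1) : (\matrix_(l < r.+1, j < r.+1) E3 l j) i i = 1.
Proof. by rewrite mxE /E3 /ind; case: ifP => j0; evalb; ring. Qed.

Lemma gam3_ok : [/\ (forall x, (x < r.+1)%N -> (id x < r.+1)%N),
  (forall x y, (x < r.+1)%N -> (y < r.+1)%N -> id x = id y -> x = y),
  (forall x, (x < r.+1)%N -> (gam3 x < r.+1)%N) &
  (forall x y, (x < r.+1)%N -> (y < r.+1)%N -> gam3 x = gam3 y -> x = y)].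
Proof.
split; [by [] | by [] | move=> x hx; rewrite /gam3; cases_if; lia
       | move=> x y hx hy; rewrite /gam3; cases_if; lia].
Qed.

Lemma G2_UR i j : (i < 1)%N -> (j < r)%N -> G2 i (gam3 (1 + j)) = 0.
Proof.
move=> hi hj; case: i hi => // _; rewrite /G2 /gam3 /Wf /Wt /ind /=; decide_all; ring.
Qed.

Lemma G2_UL : \det (\matrix_(i < 1, j < 1) G2 i (gam3 j)) = 1.
Proof. rewrite det_mx11 mxE /G2 /gam3 /Wf /Wt /ind /=; decide_all; ring. Qed.

Lemma G2_DR : \matrix_(i < r, j < r) G2 (1 + i) (gam3 (1 + j)) = FM r 0 0.
Proof.
apply/matrixP => i j; rewrite !mxE /G2 /gam3 /Wf /Wt /Ff /ind /=.
have := ltn_ord i; have := ltn_ord j; move: (i : nat) (j : nat) => i' j' hj hi.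
case: j' hj => [|j'] hj /=; decide_all; substE; rewrite /=; ring.
Qed.

Lemma det_What : pm (\det (What R r.+2)) (\det (FM r (0 : R) 0)).
Proof.
have e1 : \det (What R r.+2) = \det (\matrix_(i < r.+1, j < r.+1) G2 i j).
  rewrite -Mw_E3 det_mul_trig; [|exact: E3_trig1|exact: E3_trig2].
  by rewrite -WhatU // det_mulmx det_Umat // mulr1.
have [h1 h2 h3 h4] := gam3_ok.
have hr' := @det_reindex R _ G2 _ _ h1 h2 h3 h4.
rewrite e1; apply: pm_trans (pm_sym hr') _.
have -> : \det (\matrix_(i < r.+1, j < r.+1) G2 (id i) (gam3 j)) =
   \det (\matrix_(i < 1, j < 1) G2 i (gam3 j)) *
   \det (\matrix_(i < r, j < r) G2 (1 + i)%N (gam3 (1 + j)%N)).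
  apply: (@det_block_nat R 1 r (fun i j => G2 i (gam3 j))).
  move=> i j hi hj; exact: G2_UR.
by rewrite G2_UL G2_DR mul1r; exact: pm_refl.
Qed.

End Top2.

Lemma rank_What (F : fieldType) r : (2 <= r)%N ->
  \rank (What F r.+2) = (1 + \rank (FM r (0 : F) 0))%N.
Proof.
move=> hr.
have e1 : \rank (What F r.+2) = \rank (\matrix_(i < r.+1, j < r.+1) G2 F r i j).
  rewrite -(@Mw_E3 F r hr).
  have := @rank_mul_unit F r.+1 (\matrix_(i < r.+1, j < r.+1) Wf F r j i.+1)
             (\matrix_(l < r.+1, j < r.+1) E3 F r l j).
  move=> ->; last by apply: unit_trig; [exact: E3_trig1|exact: E3_trig2].
  rewrite -(@WhatU F r hr).
  have := @rank_mul_unit F r.+1 (What F r.+2) (Umat F r).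
  by move=> ->; rewrite ?unitmxE ?det_Umat ?unitr1.
have [h1 h2 h3 h4] := @gam3_ok r hr.
rewrite e1 -(@rank_reindex F _ (G2 F r) _ _ h1 h2 h3 h4).
rewrite -G2_DR //.
apply: (@rank_block_nat F 1 r (fun i j => G2 F r i (gam3 r j))).
  move=> i j hi hj; exact: G2_UR.
by rewrite G2_UL // oner_eq0.
Qed.


Lemma rankF2 (F : numFieldType) (a : F) : \rank (FM 2 a a) = 1%N.
Proof.
rewrite -mxrank_tr.
have -> : (FM 2 a a)^T = \matrix_(i < 2, j < 2) Ff 2 a a j i.
  by apply/matrixP => i j; rewrite !mxE.
have h1 : forall x, (x < 2)%N -> (1 - x < 2)%N by move=> x; lia.
have h2 : forall x y, (x < 2)%N -> (y < 2)%N -> (1 - x)%N = (1 - y)%N -> x = y by move=> x y; lia.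
rewrite -(@rank_reindex F 2 (fun i j => Ff 2 a a j i) (fun x => 1 - x)%N (fun x => x) h1 h2) //.
have hb := @rank_block_nat F 1 1 (fun i j => Ff 2 a a j (1 - i)%N).
apply: etrans (hb _ _) _.
- by move=> [|i] [|j] // _ _; rewrite /Ff /ind /=; ring.
- by rewrite (det_mx11 (\matrix_(i < 1, j < 1) Ff 2 a a j (1 - i)%N)) mxE /Ff /ind /=
    addr0 subr0 -mulr2n pnatr_eq0.
match goal with |- context [\rank ?M] => have -> : M = 0 end.
  by apply/matrixP => i j; rewrite !ord1 !mxE /Ff /ind /= subrr.
by rewrite mxrank0.
Qed.

Theorem theorem1p2 (n : nat) (hn : (4 <= n)%N) :
  (~~ (4 %| n)%N ->
     \det (What int n) = 2 ^+ (n./2 - 1) \/ \det (What int n) = - 2 ^+ (n./2 - 1))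
  /\ ((4 %| n)%N -> \rank (What rat n) = (n - 2)%N).
Proof.
case: n hn => [|[|r]] // hn.
have hr : (2 <= r)%N by [].
set q := (r %/ 2 - 1)%N.
set r0 := (2 + r %% 2)%N.
have er : r = (r0 + 2 * q)%N by rewrite /r0 /q; lia.
have hr0 : (2 <= r0)%N by rewrite /r0; lia.
have hhalf : ((r.+2)./2 - 1 = q.+1)%N by rewrite -divn2 /q; lia.
have hq4 : [\/ (q %% 4 = 0)%N, (q %% 4 = 1)%N, (q %% 4 = 2)%N | (q %% 4 = 3)%N] by
  case: (q %% 4)%N (ltn_pmod q (isT : (0 < 4)%N)) => [|[|[|[|]]]] //= _;
  [apply: Or41 | apply: Or42 | apply: Or43 | apply: Or44].
split.
- move=> h4.
  have d1 := det_What int r hr.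
  rewrite hhalf; change (pm (\det (What int r.+2)) (2 ^+ q.+1)).
  apply: pm_trans d1 _.
  rewrite er.
  have := @detF_iter int r0 q (0, 0) hr0; rewrite /= => d2; apply: pm_trans d2 _.
  rewrite iter_mod exprS [2 * _]mulrC.
  apply: pm_mull.
  have [e0|e0] : r0 = 3%N \/ r0 = 2%N by rewrite /r0; lia.
  + rewrite e0 detF3.
    by case: hq4 => ->; rewrite /= /fst4 /=; [left|left|right|right]; ring.
  + rewrite e0 detF2.
    case: hq4 => hq; first (exfalso; move: h4; rewrite er e0; lia).
    * by rewrite hq /= /fst4 /=; right; ring.
    * exfalso; move: h4; rewrite er e0; lia.
    * by rewrite hq /= /fst4 /=; left; ring.
- move=> h4.
  rewrite rank_What // er.
  have := @rankF_iter rat r0 q (0, 0) hr0; rewrite /= => ->.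
  rewrite iter_mod.
  have e0 : r0 = 2%N by move: h4; rewrite er /r0; lia.
  rewrite e0.
  case: hq4 => hq.
  + by rewrite hq /= rankF2; lia.
  + exfalso; move: h4; rewrite er e0; lia.
  + by rewrite hq /= /fst4 /= rankF2; lia.
  + exfalso; move: h4; rewrite er e0; lia.
Qed.
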